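(* Let $\varphi:\mathbb{R}^n\times\mathbb{R}^m\to\mathbb{R}\cup\{+\infty\}$ be a closed proper convex function and define $L(x,\lambda)=\inf_u\{\varphi(x,u)-\langle\lambda,u\rangle\}$. Let $H\in\mathbb{R}^{m\times m}$ be symmetric positive definite, let $(a_k),(c_k)$ be positive and $(b_k)$ nonnegative real sequences, let $\lambda_0\in\mathbb{R}^m$, $z_0=\lambda_0$, and for $k\geqslant0$ let $$\tilde\lambda_{k+1}=\frac{1}{b_k+1}z_k+\frac{b_k}{b_k+1}\lambda_k,$$ $$(x_{k+1},u_{k+1})\in\arg\min_{x,u}\Big\{\varphi(x,u)-\langle\tilde\lambda_{k+1},u\rangle+\frac{c_k}{2(b_k+1)}\|u\|_H^2\Big\},$$ $$\lambda_{k+1}=\tilde\lambda_{k+1}-\frac{c_k}{b_k+1}Hu_{k+1},\qquad z_{k+1}=z_k+\frac{a_k}{c_k}(b_k+1)H(\lambda_{k+1}-\tilde\lambda_{k+1}),$$ where the minimizers are assumed to exist. Then for every $k\geqslant1$, $$\min_xL(x,\lambda_k)=L(x_k,\lambda_k)=\varphi(x_k,u_k)-\langle\lambda_k,u_k\rangle.$$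
   Context: $\|u\|_H^2=u^{\mathrm T}Hu$. *)

(* Defs.v *)
From HB Require Import structures.
From mathcomp Require Import all_boot all_order all_algebra.
From mathcomp Require Import all_classical all_reals all_analysis.
Set Implicit Arguments. Unset Strict Implicit. Unset Printing Implicit Defensive.
Import Order.TTheory GRing.Theory Num.Theory numFieldTopology.Exports numFieldNormedType.Exports.
Local Open Scope ring_scope.
Definition dotv (R : realType) m (v w : 'cV[R]_m) : R := (v^T *m w) 0 0.
Definition Hnorm2 (R : realType) m (H : 'M[R]_m) (u : 'cV[R]_m) : R :=
  (u^T *m H *m u) 0 0.

Definition sym_posdef (R : realType) m (H : 'M[R]_m) : Prop :=
  H^T = H /\ forall v : 'cV[R]_m, v != 0 -> (0 < Hnorm2 H v)%R.

Local Open Scope ereal_scope.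

Definition proper_fun (R : realType) n m (phi : 'cV[R]_n -> 'cV[R]_m -> \bar R) :=
  (forall x u, phi x u != -oo) /\ (exists x u, phi x u < +oo).

Definition convex_fun (R : realType) n m (phi : 'cV[R]_n -> 'cV[R]_m -> \bar R) :=
  forall x1 u1 x2 u2 (t : R), (0 < t < 1)%R ->
    phi (t *: x1 + (1 - t) *: x2)%R (t *: u1 + (1 - t) *: u2)%R
      <= t%:E * phi x1 u1 + (1 - t)%:E * phi x2 u2.

Definition closed_fun (R : realType) n m (phi : 'cV[R]_n -> 'cV[R]_m -> \bar R) :=
  lower_semicontinuous (fun p : 'cV[R]_n * 'cV[R]_m => phi p.1 p.2).

Definition Lag (R : realType) n m (phi : 'cV[R]_n -> 'cV[R]_m -> \bar R)
  (x : 'cV[R]_n) (lam : 'cV[R]_m) : \bar R :=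
  ereal_inf [set phi x u - (dotv lam u)%:E | u in [set: 'cV[R]_m]].

(* Main.v *)
Require Import Defs.
From HB Require Import structures.
From mathcomp Require Import all_boot all_order all_algebra.
From mathcomp Require Import all_classical all_reals all_analysis.
From mathcomp Require Import ring lra.
Import Order.TTheory GRing.Theory Num.Theory.
Set Implicit Arguments. Unset Strict Implicit.
Local Open Scope ring_scope.
Section S.
Variable R : realType.
Variable m : nat.
Definition Bf (H : 'M[R]_m) (v w : 'cV[R]_m) : R := (v^T *m H *m w) 0 0.
Lemma dotvD (v w1 w2 : 'cV[R]_m) : dotv v (w1 + w2) = dotv v w1 + dotv v w2.
Proof. by rewrite /dotv mulmxDr mxE. Qed.
Lemma dotvZ (v w : 'cV[R]_m) a : dotv v (a *: w) = a * dotv v w.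
Proof. by rewrite /dotv -scalemxAr mxE. Qed.
Lemma BfDl H (v1 v2 w : 'cV[R]_m) : Bf H (v1 + v2) w = Bf H v1 w + Bf H v2 w.
Proof. by rewrite /Bf raddfD !mulmxDl mxE. Qed.
Lemma BfDr H (v w1 w2 : 'cV[R]_m) : Bf H v (w1 + w2) = Bf H v w1 + Bf H v w2.
Proof. by rewrite /Bf mulmxDr mxE. Qed.
Lemma BfZl H (v w : 'cV[R]_m) a : Bf H (a *: v) w = a * Bf H v w.
Proof. by rewrite /Bf linearZ -!scalemxAl mxE. Qed.
Lemma BfZr H (v w : 'cV[R]_m) a : Bf H v (a *: w) = a * Bf H v w.
Proof. by rewrite /Bf -scalemxAr mxE. Qed.
Lemma Bf_sym H (v w : 'cV[R]_m) : H^T = H -> Bf H v w = Bf H w v.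
Proof.
move=> HT; rewrite /Bf.
have E : (v^T *m H *m w) 0 0 = ((v^T *m H *m w)^T) 0 0.
  by rewrite [RHS]mxE.
rewrite E.
by rewrite !trmx_mul trmxK HT mulmxA.
Qed.
Lemma dotv_sym (v w : 'cV[R]_m) : dotv v w = dotv w v.
Proof.
rewrite /dotv.
have E : (v^T *m w) 0 0 = ((v^T *m w)^T) 0 0 by rewrite [RHS]mxE.
by rewrite E trmx_mul trmxK.
Qed.
Lemma dotv_lam H (l w y : 'cV[R]_m) a : H^T = H ->
  dotv (l - a *: (H *m w)) y = dotv l y - a * Bf H w y.
Proof.
move=> HT; rewrite dotv_sym [dotv l y]dotv_sym /dotv mulmxBr mxE -scalemxAr.
rewrite mulmxA -/(Bf H y w) Bf_sym //; congr (_ + _).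
by rewrite /Bf; set M := (y^T *m H *m w); rewrite !mxE.
Qed.
Lemma keyreal (X Y K : R) : (forall t : R, 0 < t < 1 -> t * X <= t * Y + t ^+ 2 * K) -> X <= Y.
Proof.
move=> Ht; rewrite leNgt; apply/negP => XY.
have H1 : forall t, 0 < t < 1 -> X <= Y + t * K.
  move=> t /[dup] t01 /andP[t0 _]; have := Ht t t01.
  by rewrite expr2 -mulrA -mulrDr ler_pM2l.
have [K0|K0] := lerP K 0.
  have h : ((0:R) < 2^-1) && (2^-1 < (1:R)) by apply/andP; split; lra.
  have := H1 _ h; nra.
set D := Y - X.
set t := (X - Y) / (2 * K + 2 * (X - Y)).
have den : 0 < 2 * K + 2 * (X - Y) by lra.
have tE : t * (2 * K + 2 * (X - Y)) = X - Y by rewrite /t mulfVK // gt_eqF.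
have t0 : 0 < t by rewrite /t divr_gt0 // subr_gt0.
have t1 : t < 1 by rewrite /t ltr_pdivrMr // mul1r; lra.
have := H1 t; rewrite t0 t1 => /(_ isT). nra.
Qed.
End S.

Lemma Hnorm2E (R : realType) m (H : 'M[R]_m) v : Hnorm2 H v = Bf H v v.
Proof. by []. Qed.

Local Open Scope classical_set_scope.

Theorem lemma2 (R : realType) (n m : nat)
  (phi : 'cV[R]_n -> 'cV[R]_m -> \bar R)
  (H : 'M[R]_m) (a b c : nat -> R) (lam0 : 'cV[R]_m)
  (x : nat -> 'cV[R]_n) (u lam lamt z : nat -> 'cV[R]_m) :
  closed_fun phi -> proper_fun phi -> convex_fun phi ->
  sym_posdef H ->
  (forall k, 0 < a k) -> (forall k, 0 < c k) -> (forall k, 0 <= b k) ->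
  lam 0%N = lam0 -> z 0%N = lam0 ->
  (forall k, lamt k.+1 =
     (b k + 1)^-1 *: z k + (b k / (b k + 1)) *: lam k) ->
  (forall k, forall (x' : 'cV[R]_n) (u' : 'cV[R]_m),
     (phi (x k.+1) (u k.+1) - (dotv (lamt k.+1) (u k.+1))%:E
        + (c k / (2 * (b k + 1)) * Hnorm2 H (u k.+1))%:E
      <= phi x' u' - (dotv (lamt k.+1) u')%:E
        + (c k / (2 * (b k + 1)) * Hnorm2 H u')%:E)%E) ->
  (forall k, lam k.+1 = lamt k.+1 - (c k / (b k + 1)) *: (H *m u k.+1)) ->
  (forall k, z k.+1 =
     z k + (a k / c k * (b k + 1)) *: (H *m (lam k.+1 - lamt k.+1))) ->
  forall k, (1 <= k)%N ->
    ereal_inf [set Lag phi x' (lam k) | x' in [set: 'cV[R]_n]]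
      = Lag phi (x k) (lam k) /\
    Lag phi (x k) (lam k) = (phi (x k) (u k) - (dotv (lam k) (u k))%:E)%E.
Proof.
move=> _ [Hnm [x0 [u0 Hfin]]] Hcvx [HT _] ha hc hb _ _ Hlt Hmin Hlam _ k.
case: k => // j _.
have [P0 HP] : exists P0 : R, phi (x j.+1) (u j.+1) = P0%:E.
  have := Hmin j x0 u0; have := Hnm (x j.+1) (u j.+1).
  case: (phi (x j.+1) (u j.+1)) => [r | |] //; first by exists r.
  move: Hfin (Hnm x0 u0); case: (phi x0 u0) => [r| |] //= _ _ _.
have b1 : b j + 1 != 0 by rewrite gt_eqF // ltr_wpDl.
have alE : c j / (b j + 1) = 2 * (c j / (2 * (b j + 1))).
  by field; rewrite b1.
set al := c j / (2 * (b j + 1)).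
have key : forall x' u', ((P0 - dotv (lam j.+1) (u j.+1))%:E
     <= phi x' u' - (dotv (lam j.+1) u')%:E)%E.
  move=> x' u'; have := Hnm x' u'; case E: (phi x' u') => [r| |] // _; last first.
    by rewrite /= leey.
  rewrite lee_fin !Hlam alE !dotv_lam //.
  apply: (@keyreal _ _ _ (al * (Bf H u' u' - 2 * Bf H (u j.+1) u' + Bf H (u j.+1) (u j.+1)))).
  move=> t /[dup] t01 /andP[t0 t1].
  have Hc := Hcvx x' u' (x j.+1) (u j.+1) t t01.
  rewrite E HP -!EFinM -EFinD in Hc.
  set xt := (t *: x' + (1 - t) *: x j.+1) in Hc *.
  set ut := (t *: u' + (1 - t) *: u j.+1) in Hc *.
  have [Ct HC] : exists Ct : R, phi xt ut = Ct%:E.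
    move: Hc (Hnm xt ut); case: (phi xt ut) => [r'| |] //; by exists r'.
  have Hm := Hmin j xt ut.
  rewrite HP HC -!EFinB -!EFinD !lee_fin in Hm.
  rewrite HC lee_fin in Hc.
  rewrite !Hnorm2E /ut !(BfDl, BfDr, BfZl, BfZr, dotvD, dotvZ) in Hm.
  rewrite (Bf_sym u' (u j.+1)) // in Hm.
  rewrite -/al in Hm *.
  move: Hm Hc.
  generalize (dotv (lamt j.+1) (u j.+1)) (dotv (lamt j.+1) u') (Bf H u' u')
    (Bf H (u j.+1) u') (Bf H (u j.+1) (u j.+1)) => L1 L2 N1 N2 N3 Hm Hc.
  nra.
split.
  apply/eqP; rewrite eq_le; apply/andP; split.
    by apply: ge_ereal_inf; exists (Lag phi (x j.+1) (lam j.+1)) => //; exists (x j.+1).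
  have -> : Lag phi (x j.+1) (lam j.+1) = (P0 - dotv (lam j.+1) (u j.+1))%:E.
    apply/eqP; rewrite eq_le; apply/andP; split.
      by apply: ge_ereal_inf; exists (phi (x j.+1) (u j.+1) - (dotv (lam j.+1) (u j.+1))%:E)%E;
        [exists (u j.+1) | rewrite HP -EFinB].
    by apply: le_ereal_inf_tmp => _ [u' _ <-]; exact: key.
  apply: le_ereal_inf_tmp => _ [x' _ <-].
  by apply: le_ereal_inf_tmp => _ [u' _ <-]; exact: key.
rewrite HP -EFinB.
apply/eqP; rewrite eq_le; apply/andP; split.
  by apply: ge_ereal_inf; exists (phi (x j.+1) (u j.+1) - (dotv (lam j.+1) (u j.+1))%:E)%E;
    [exists (u j.+1) | rewrite HP -EFinB].
by apply: le_ereal_inf_tmp => _ [u' _ <-]; exact: key.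
Qed.
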